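(* Assume $|C|<m$ and $A\not\subseteq B$, and let $\mathcal S_1=\{(w_1+uw_2,w_3)\in\mathcal R^m: w_1\in\Delta_A,\ w_2\in\Delta_B,\ w_3\in\Delta_C^c\}$. Then $\Phi(\mathscr C_{\mathcal S_1})$ is a $4$-weight linear code over $\mathbb F_q$ with parameters $\big[2q^{|A|+|B|}(q^m-q^{|C|}),\ m+|A|+|A\cup B|,\ (q-1)q^{|A|+|B|-1}(q^m-q^{|C|})\big]$ whose nonzero Hamming weights and frequencies are: $(q-1)q^{|A|+|B|-1}(q^m-q^{|C|})$ with frequency $2(q^{|A\cup B|-|B|}-1)$; $2(q-1)q^{|A|+|B|-1}(q^m-q^{|C|})$ with frequency $q^{m+|A|+|A\cup B|}-2q^{m-|C|+|A\cup B|-|B|}+q^{m-|C|}$; $(q-1)q^{|A|+|B|-1}(2q^m-q^{|C|})$ with frequency $2(q^{|A\cup B|-|B|}-1)(q^{m-|C|}-1)$; $2(q-1)q^{m+|A|+|B|-1}$ with frequency $q^{m-|C|}-1$. Moreover, if $q=2$ or $q=3$, then $\Phi(\mathscr C_{\mathcal S_1})$ is self-orthogonal with respect to the Euclidean inner product on $\mathbb F_q^{n}$.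
   Context: Let $q$ be a prime power, $\mathbb F_q$ the field of order $q$, $m\ge 2$ an integer and $[m]=\{1,\dots,m\}$. For $v\in\mathbb F_q^m$, $\mathrm{supp}(v)=\{i:v_i\ne0\}$ and $wt_H$ is Hamming weight. For nonempty $P\subseteq[m]$, $\Delta_P=\{v\in\mathbb F_q^m:\mathrm{supp}(v)\subseteq P\}$, $\Delta_P^c=\mathbb F_q^m\setminus\Delta_P$. $A,B,C$ denote nonempty subsets of $[m]$. Let $R=\mathbb F_q[u]/\langle u^2\rangle$ and $\mathcal R=R\times\mathbb F_q$; each element of $\mathcal R^m$ is uniquely $(d+ue,f)$ with $d,e,f\in\mathbb F_q^m$. Define $\langle(d_1+ue_1,f_1),(d_2+ue_2,f_2)\rangle=(d_1+ue_1)\cdot(d_2+ue_2)+u\,f_1\cdot f_2\in R$, where $x\cdot y=\sum_i x_iy_i$. For a nonempty $\mathcal D\subseteq\mathcal R^m$ listed in a fixed order, $\mathscr C_{\mathcal D}=\{(\langle r,s\rangle)_{s\in\mathcal D}: r\in\mathcal R^m\}\subseteq R^{|\mathcal D|}$. The Gray map $\Phi:R^n\to\mathbb F_q^{2n}$ is $\Phi(d+ue)=(e,d+e)$ for $d,e\in\mathbb F_q^n$, applied to a code elementwise. An $[n,k,d]$ code is a linear code of length $n$, dimension $k$, minimum Hamming distance $d$; a code $\mathcal C$ is self-orthogonal if $\mathcal C\subseteq\mathcal C^\perp$. *)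

(* Defs.v *)
From HB Require Import structures.
From mathcomp Require Import all_boot all_order all_algebra all_field.
Set Implicit Arguments. Unset Strict Implicit. Unset Printing Implicit Defensive.
Import GRing.Theory.
Local Open Scope ring_scope.

Definition supp (F : finFieldType) (m : nat) (v : 'rV[F]_m) : {set 'I_m} :=
  [set i | v 0 i != 0].

Definition Delta (F : finFieldType) (m : nat) (P : {set 'I_m}) : {set 'rV[F]_m} :=
  [set v | supp v \subset P].
Arguments Delta F {m} P.

Definition Deltac (F : finFieldType) (m : nat) (P : {set 'I_m}) : {set 'rV[F]_m} :=
  ~: Delta F P.

(* An element of R = F[u]/<u^2> is a pair (x, y) standing for x + u y.
   An element (d + u e, f) of (R x F)^m is the triple ((d, e), f). *)
Arguments Deltac F {m} P.

Definition Rmul (F : finFieldType) (x y : F * F) : F * F :=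
  (x.1 * y.1, x.1 * y.2 + x.2 * y.1).
Definition Radd (F : finFieldType) (x y : F * F) : F * F := (x.1 + y.1, x.2 + y.2).

Definition RMtype (F : finFieldType) (m : nat) : finType :=
  ('rV[F]_m * 'rV[F]_m * 'rV[F]_m)%type.

Definition dotF (F : finFieldType) (m : nat) (x y : 'rV[F]_m) : F :=
  \sum_(i < m) x 0 i * y 0 i.

(* <(d1+ue1,f1),(d2+ue2,f2)> = (d1+ue1).(d2+ue2) + u f1.f2  in R *)
Definition innerR (F : finFieldType) (m : nat) (r s : RMtype F m) : F * F :=
  Radd (\big[@Radd F/(0, 0)]_(i < m)
          Rmul (r.1.1 0 i, r.1.2 0 i) (s.1.1 0 i, s.1.2 0 i))
       (0, dotF r.2 s.2).

Definition codeword (F : finFieldType) (m : nat) (D : {set RMtype F m})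
  (r : RMtype F m) : 'I_#|D| -> F * F :=
  fun j => innerR r (enum_val j).

(* Gray map Phi(d + u e) = (e, d + e) *)
Definition gray (F : finFieldType) (n : nat) (x : 'I_n -> F * F) : 'rV[F]_(n + n) :=
  row_mx (\row_j (x j).2) (\row_j ((x j).1 + (x j).2)).

Arguments codeword {F m} D r j.

Definition grayCode (F : finFieldType) (m : nat) (D : {set RMtype F m})
  : {set 'rV[F]_(#|D| + #|D|)} :=
  [set gray (codeword D r) | r : RMtype F m].

Definition wtH (F : finFieldType) (n : nat) (x : 'rV[F]_n) : nat :=
  #|[set i | x 0 i != 0]|.

Definition S1 (F : finFieldType) (m : nat) (A B C : {set 'I_m}) : {set RMtype F m} :=
  [set s : RMtype F m | [&& s.1.1 \in Delta F A, s.1.2 \in Delta F B &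
                            s.2 \in Deltac F C]].

Definition is_linear_code (F : finFieldType) (n : nat) (Cd : {set 'rV[F]_n}) : Prop :=
  0 \in Cd /\ forall (a : F) x y, x \in Cd -> y \in Cd -> a *: x + y \in Cd.

Definition code_dim (F : finFieldType) (n : nat) (Cd : {set 'rV[F]_n}) : nat :=
  \dim <<enum Cd>>%VS.

Definition min_dist_is (F : finFieldType) (n : nat) (Cd : {set 'rV[F]_n}) (d : nat) : Prop :=
  (exists2 x, x \in Cd & exists2 y, y \in Cd & x != y /\ wtH (x - y) = d) /\
  (forall x y, x \in Cd -> y \in Cd -> x != y -> (d <= wtH (x - y))%N).

Definition freq (F : finFieldType) (n : nat) (Cd : {set 'rV[F]_n}) (w : nat) : nat :=
  #|[set c in Cd | wtH c == w]|.

Definition nz_weights (F : finFieldType) (n : nat) (Cd : {set 'rV[F]_n}) : seq nat :=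
  undup [seq wtH c | c <- enum Cd & c != 0].

Definition self_orthogonal (F : finFieldType) (n : nat) (Cd : {set 'rV[F]_n}) : Prop :=
  forall x y, x \in Cd -> y \in Cd -> dotF x y = 0.

(* Main.v *)
Require Import Defs.
From HB Require Import structures.
From mathcomp Require Import all_boot all_order all_algebra all_field.
From mathcomp Require Import ring zify.
Import GRing.Theory.
Local Open Scope ring_scope.
Set Implicit Arguments. Unset Strict Implicit. Unset Printing Implicit Defensive.
Section Basic.
Variable F : finFieldType.
Local Notation q := #|F|.

Lemma q_gt1 : (1 < q)%N. Proof. exact: finNzRing_gt1. Qed.

Lemma qR0 : (q%:R : F) = 0.
Proof.
have H : \sum_(x : F) x = \sum_(x : F) (x + 1).
  exact: (reindex_inj (addIr (1 : F))).
move: H; rewrite big_split /= sumr_const => /eqP; rewrite -subr_eq0 opprD addrA subrr add0r oppr_eq0.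
by rewrite cardT -cardE => /eqP ->.
Qed.

Variable m : nat.
Implicit Types (P Q : {set 'I_m}) (v w : 'rV[F]_m).

Lemma DeltaE P v : (supp v \subset P) = (v \in Delta F P).
Proof. by rewrite inE. Qed.

Lemma DeltaP P v : reflect (forall i, i \notin P -> v 0 i = 0) (v \in Delta F P).
Proof.
rewrite inE /supp; apply: (iffP subsetP) => H i.
  move=> iP; apply/eqP; apply: contraNT iP => nz; by apply: H; rewrite inE.
by rewrite inE => nz; apply: contraR nz => /H ->.
Qed.

Lemma Delta_add P v w : v \in Delta F P -> w \in Delta F P -> v + w \in Delta F P.
Proof. by move=> /DeltaP Hv /DeltaP Hw; apply/DeltaP => i iP; rewrite mxE Hv ?Hw ?addr0. Qed.
Lemma Delta_opp P v : (- v \in Delta F P) = (v \in Delta F P).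
Proof.
by apply/DeltaP/DeltaP => H i iP; move: (H i iP); rewrite ?mxE => /eqP; rewrite ?oppr_eq0 => /eqP ->; rewrite ?oppr0.
Qed.
Lemma Delta_scale P (a : F) v : v \in Delta F P -> a *: v \in Delta F P.
Proof. by move=> /DeltaP Hv; apply/DeltaP => i iP; rewrite mxE Hv ?mulr0. Qed.
Lemma Delta0 P : 0 \in Delta F P.
Proof. by apply/DeltaP => i _; rewrite mxE. Qed.
Lemma Delta_delta P i : i \in P -> delta_mx 0 i \in Delta F P.
Proof.
move=> iP; apply/DeltaP => j jP; rewrite mxE.
by case: (j =P i) jP => [->|_]; rewrite ?iP ?andbF.
Qed.
Lemma DeltaI P Q v : (v \in Delta F (P :&: Q)) = (v \in Delta F P) && (v \in Delta F Q).
Proof.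
apply/DeltaP/andP => [H | [/DeltaP H1 /DeltaP H2]].
  by split; apply/DeltaP => i iP; apply: H; rewrite inE negb_and iP ?orbT.
by move=> i; rewrite inE negb_and => /orP [/H1|/H2].
Qed.
Lemma DeltaT v : v \in Delta F setT.
Proof. by apply/DeltaP => i; rewrite inE. Qed.
Lemma Delta_set0 v : (v \in Delta F set0) = (v == 0).
Proof.
apply/DeltaP/eqP => [H | ->]; last by move=> i _; rewrite mxE.
by apply/rowP => i; rewrite mxE H ?inE.
Qed.

Lemma card_bij (T1 T2 : finType) (g : T1 -> T2) (P : pred T2) :
  bijective g -> #|[set x | P (g x)]| = #|[set y | P y]|.
Proof.
move=> gb; rewrite -(card_imset _ (bij_inj gb)); apply: eq_card => y.
have [h gh hg] := gb.
apply/imsetP/idP => [[x]|]; first by rewrite !inE => Px ->.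
by rewrite inE => Py; exists (h y); rewrite ?inE hg.
Qed.

Lemma card_Delta P : #|Delta F P| = (q ^ #|P|)%N.
Proof.
pose fam : 'I_m -> pred F := fun i => if i \in P then predT else pred1 0.
pose g (f : {ffun 'I_m -> F}) : 'rV[F]_m := \row_i f i.
have gb : bijective g.
  exists (fun v : 'rV[F]_m => [ffun i => v 0 i]) => [f|v].
    by apply/ffunP => i; rewrite ffunE mxE.
  by apply/rowP => i; rewrite mxE ffunE.
have -> : #|Delta F P| = #|[set v : 'rV[F]_m | v \in Delta F P]|.
  by apply: eq_card => v; rewrite [in RHS]inE.
rewrite -(@card_bij _ _ g (fun v => v \in Delta F P) gb).
have -> : #|[set x | g x \in Delta F P]| = #|(family fam : simpl_pred {ffun 'I_m -> F})|.
  apply: eq_card => f; rewrite inE; apply/DeltaP/familyP => H i.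
    rewrite /fam; case: ifP => iP //=; rewrite inE; have := H i; rewrite mxE iP => ->; by [].
  move=> iP; have := H i; rewrite /fam (negbTE iP) inE mxE => /eqP; by [].
rewrite card_family foldrE big_map big_enum /=.
rewrite -prod_nat_const (big_mkcond (fun i => i \in P)) /=; apply: eq_bigr => i _.
by rewrite /fam; case: ifP => _; rewrite ?card1 // cardT -cardE.
Qed.
End Basic.
Section Count.
Variable F : finFieldType.
Local Notation q := #|F|.

Lemma cardE_sum (T : finType) (X : {set T}) (Pr : pred T) :
  #|[set x in X | Pr x]| = (\sum_(x in X) Pr x)%N.
Proof.
rewrite -sum1_card (eq_bigl (fun x => (x \in X) && Pr x)) ?big_mkcondr /=; last by move=> x; rewrite inE.
by apply: eq_bigr => x _; case: (Pr x).
Qed.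

Lemma card_neq (T : finType) (X : {set T}) (g : T -> F) :
  #|[set x in X | g x != 0%R]| = (#|X| - #|[set x in X | g x == 0%R]|)%N.
Proof.
have -> : #|X| = (#|[set x in X | g x == 0%R]| + #|[set x in X | g x != 0%R]|)%N.
  rewrite !cardE_sum -big_split /= -sum1_card; apply: eq_bigr => x _.
  by case: eqP.
by rewrite addKn.
Qed.

Lemma sum_levels (T : finType) (X : {set T}) (g : T -> F) :
  (\sum_(t : F) #|[set x in X | g x == t]|)%N = #|X|.
Proof.
under eq_bigr do rewrite cardE_sum.
rewrite exchange_big /= -sum1_card; apply: eq_bigr => x _.
rewrite (bigD1 (g x)) //= eqxx big1 // => t; by rewrite eq_sym => /negbTE ->.
Qed.

Definition bal (T : finType) (X : {set T}) (g : T -> F) :=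
  forall t, (q * #|[set x in X | g x == t]|)%N = #|X|.

Lemma bal_neq (T : finType) (X : {set T}) (g : T -> F) :
  bal X g -> (q * #|[set x in X | g x != 0%R]| = (q - 1) * #|X|)%N.
Proof.
by move=> H; rewrite card_neq mulnBr H mulnBl mul1n.
Qed.

Lemma cardX_suml (T1 T2 : finType) (X : {set T1}) (Z : {set T2}) (Pr : T1 -> T2 -> bool) :
  #|[set p in setX X Z | Pr p.1 p.2]| = (\sum_(x in X) #|[set z in Z | Pr x z]|)%N.
Proof.
rewrite cardE_sum; under [RHS]eq_bigr do rewrite cardE_sum.
rewrite pair_big_dep /=; apply: eq_bigl => -[x z]; by rewrite in_setX.
Qed.

Lemma cardX_sumr (T1 T2 : finType) (X : {set T1}) (Z : {set T2}) (Pr : T1 -> T2 -> bool) :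
  #|[set p in setX X Z | Pr p.1 p.2]| = (\sum_(z in Z) #|[set x in X | Pr x z]|)%N.
Proof.
rewrite cardE_sum; under [RHS]eq_bigr do rewrite cardE_sum.
rewrite exchange_big pair_big_dep /=; apply: eq_bigl => -[x z]; by rewrite in_setX.
Qed.

Lemma bal_addl (T1 T2 : finType) (X : {set T1}) (Z : {set T2}) (g : T1 -> F) (h : T2 -> F) :
  bal X g -> bal (setX X Z) (fun p => g p.1 + h p.2).
Proof.
move=> H t; rewrite (cardX_sumr X Z (fun a b => g a + h b == t)) big_distrr /= cardsX mulnC -sum_nat_const.
by apply: eq_bigr => z _; rewrite -(H (t - h z)); congr (_ * _)%N; apply: eq_card => x; rewrite !inE -[in RHS](inj_eq (addIr (h z))) subrK.
Qed.

Lemma bal_addr (T1 T2 : finType) (X : {set T1}) (Z : {set T2}) (g : T1 -> F) (h : T2 -> F) :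
  bal Z h -> bal (setX X Z) (fun p => g p.1 + h p.2).
Proof.
move=> H t; rewrite (cardX_suml X Z (fun a b => g a + h b == t)) big_distrr /= cardsX -sum_nat_const.
by apply: eq_bigr => x _; rewrite -(H (t - g x)); congr (_ * _)%N; apply: eq_card => z; rewrite !inE -[in RHS](inj_eq (addIr (g x))) subrK addrC.
Qed.

Lemma zero_addl (T1 T2 : finType) (X : {set T1}) (Z : {set T2}) (g : T1 -> F) (h : T2 -> F) :
  (forall x, x \in X -> g x = 0) ->
  #|[set p in setX X Z | g p.1 + h p.2 != 0%R]| = (#|X| * #|[set z in Z | h z != 0%R]|)%N.
Proof.
move=> H; rewrite (cardX_suml X Z (fun a b => g a + h b != 0)) -sum_nat_const; apply: eq_bigr => x xX.
by apply: eq_card => z; rewrite !inE H // add0r.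
Qed.

Variable m : nat.
Implicit Types (P : {set 'I_m}) (v w : 'rV[F]_m).

Lemma dotFDl u v w : dotF (u + v) w = dotF u w + dotF v w.
Proof. by rewrite /dotF -big_split; apply: eq_bigr => i _; rewrite mxE mulrDl. Qed.
Lemma dotFDr u v w : dotF w (u + v) = dotF w u + dotF w v.
Proof. by rewrite /dotF -big_split; apply: eq_bigr => i _; rewrite mxE mulrDr. Qed.
Lemma dotFZl (a : F) v w : dotF (a *: v) w = a * dotF v w.
Proof. by rewrite /dotF mulr_sumr; apply: eq_bigr => i _; rewrite mxE mulrA. Qed.
Lemma dotFZr (a : F) v w : dotF w (a *: v) = a * dotF w v.
Proof. by rewrite /dotF mulr_sumr; apply: eq_bigr => i _; rewrite mxE mulrCA. Qed.
Lemma dotF0l w : dotF 0 w = 0.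
Proof. by rewrite /dotF big1 // => i _; rewrite mxE mul0r. Qed.
Lemma dotF_delta v i : dotF v (delta_mx 0 i) = v 0 i.
Proof.
rewrite /dotF (bigD1 i) //= big1 ?addr0; first by rewrite mxE !eqxx mulr1.
by move=> j nj; rewrite mxE (negbTE nj) andbF mulr0.
Qed.

Lemma dotF_Delta_zero P v w : v \in Delta F (~: P) -> w \in Delta F P -> dotF v w = 0.
Proof.
move=> /DeltaP Hv /DeltaP Hw; rewrite /dotF big1 // => i _.
by case: (boolP (i \in P)) => iP; [rewrite Hv ?mul0r // inE negbK | rewrite Hw ?mulr0].
Qed.

Lemma bal_dot P v : v \notin Delta F (~: P) -> bal (Delta F P) (dotF v).
Proof.
move=> Hv.
have [i iP nz] : exists2 i, i \in P & v 0 i != 0.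
  case: (pickP (fun i => (i \in P) && (v 0 i != 0))) => [i /andP[iP nz] | H].
    by exists i.
  case/negP: Hv; apply/DeltaP => i; rewrite inE negbK => iP.
  by move: (H i); rewrite iP /= => /negbFE/eqP.
have lev t : #|[set w in Delta F P | dotF v w == t]| = #|[set w in Delta F P | dotF v w == 0%R]|.
  pose tau w := w + (t / v 0 i) *: delta_mx 0 i.
  have taui : injective tau by move=> x y; apply: addIr.
  rewrite -(@card_bij _ _ tau (fun w => (w \in Delta F P) && (dotF v w == t)) (injF_bij taui)).
  apply: eq_card => w; rewrite !inE /tau dotFDr dotFZr dotF_delta divfK // !DeltaE.
  have -> : (w + t / v 0 i *: delta_mx 0 i \in Delta F P) = (w \in Delta F P).
    apply/idP/idP => H; last by apply: Delta_add => //; apply: Delta_scale; apply: Delta_delta.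
    rewrite -(addrK (t / v 0 i *: delta_mx 0 i) w); apply: Delta_add => //.
    by rewrite Delta_opp; apply: Delta_scale; apply: Delta_delta.
  by congr (_ && _); rewrite -subr_eq0 addrK.
move=> t; rewrite lev -(sum_levels (Delta F P) (dotF v)).
rewrite (eq_bigr (fun=> #|[set w in Delta F P | dotF v w == 0%R]|)) => [|s _]; last by rewrite lev.
by rewrite sum_nat_const cardT -cardE.
Qed.

Lemma dot_nz_bal P v : v \notin Delta F (~: P) ->
  (q * #|[set w in Delta F P | dotF v w != 0%R]| = (q - 1) * q ^ #|P|)%N.
Proof. by move=> H; rewrite (bal_neq (bal_dot H)) card_Delta. Qed.

Lemma dot_nz_zero P v : v \in Delta F (~: P) ->
  #|[set w in Delta F P | dotF v w != 0%R]| = 0%N.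
Proof.
move=> H; rewrite cardE_sum big1 // => w wP; by rewrite (dotF_Delta_zero H wP) eqxx.
Qed.
End Count.
Lemma card_sum_all (T : finType) (Pr : pred T) : #|[set x | Pr x]| = (\sum_x Pr x)%N.
Proof.
rewrite -sum1_card (eq_bigl Pr) ?big_mkcond /=; last by move=> x; rewrite inE.
by apply: eq_bigr => x _; case: (Pr x).
Qed.

Lemma sum_setX (R : Type) (idx : R) (op : Monoid.com_law idx) (T1 T2 : finType)
  (X : {set T1}) (Z : {set T2}) (f : T1 * T2 -> R) :
  \big[op/idx]_(s in setX X Z) f s = \big[op/idx]_(x in X) \big[op/idx]_(z in Z) f (x, z).
Proof.
rewrite pair_big_dep /=; apply: eq_big => [[x z]|[x z] _] //; by rewrite in_setX.
Qed.

Lemma wt_gray (F : finFieldType) n (x : 'I_n -> F * F) :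
  wtH (gray x) = (\sum_j (((x j).2 != 0%R) + (((x j).1 + (x j).2)%R != 0%R)))%N.
Proof.
rewrite /wtH /gray card_sum_all big_split_ord /= big_split /=.
by congr (_ + _)%N; apply: eq_bigr => j _; rewrite ?row_mxEl ?row_mxEr mxE.
Qed.

Lemma dot_gray (F : finFieldType) n (x y : 'I_n -> F * F) :
  dotF (gray x) (gray y) = \sum_j ((x j).2 * (y j).2 + ((x j).1 + (x j).2) * ((y j).1 + (y j).2)).
Proof.
rewrite /dotF /gray big_split_ord /= big_split /=.
by congr (_ + _); apply: eq_bigr => j _; rewrite ?row_mxEl ?row_mxEr !mxE.
Qed.

Lemma wtH_eq0 (F : finFieldType) n (x : 'rV[F]_n) : (wtH x == 0%N) = (x == 0).
Proof.
rewrite /wtH cards_eq0; apply/eqP/eqP => [H|->].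
  apply/rowP => i; rewrite mxE; apply/eqP; apply: contraT => nz.
  have : i \in [set i | x 0 i != 0] by rewrite inE.
  by rewrite H inE.
by apply/setP => i; rewrite !inE mxE eqxx.
Qed.

Section Code.
Variables (F : finFieldType) (m : nat) (A B C : {set 'I_m}).
Local Notation q := #|F|.
Local Notation S := (S1 F A B C).
Local Notation RM := (RMtype F m).

Lemma S1E : S = setX (setX (Delta F A) (Delta F B)) (Deltac F C).
Proof. by apply/setP => -[[d e] f]; rewrite !inE /= andbA. Qed.

Lemma innerR_E (r s : RM) : innerR r s =
  (dotF r.1.1 s.1.1, dotF r.1.2 s.1.1 + dotF r.1.1 s.1.2 + dotF r.2 s.2).
Proof.
rewrite /innerR /Radd /=.
have H1 := big_morph (fun p : F * F => p.1) (id2 := (0, 0)) (op2 := @Radd F) (fun x y => erefl) erefl.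
have H2 := big_morph (fun p : F * F => p.2) (id2 := (0, 0)) (op2 := @Radd F) (fun x y => erefl) erefl.
rewrite H1 H2 addr0 /= /dotF -big_split /=; congr pair.
by rewrite -!big_split /=; apply: eq_bigr => i _; ring.
Qed.

Definition psi (r : RM) : 'rV[F]_(#|S| + #|S|) := gray (codeword S r).

Lemma psi_lin (a : F) (r r' : RM) : psi (a *: r + r') = a *: psi r + psi r'.
Proof.
rewrite /psi /gray scale_row_mx add_row_mx; congr row_mx; apply/rowP => j;
  rewrite !mxE /codeword !innerR_E /= !dotFDl !dotFZl.
all: ring.
Qed.

Lemma psi_add r r' : psi (r + r') = psi r + psi r'.
Proof. by have := psi_lin 1 r r'; rewrite !scale1r. Qed.
Lemma psi0 : psi 0 = 0.
Proof. by apply: (addrI (psi 0)); rewrite -psi_add !addr0. Qed.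
Lemma psi_opp r : psi (- r) = - psi r.
Proof. by have := psi_lin (-1) r 0; rewrite addr0 psi0 addr0 !scaleN1r. Qed.
Lemma psi_sub r r' : psi (r - r') = psi r - psi r'.
Proof. by rewrite psi_add psi_opp. Qed.

Local Notation Cd := (grayCode S).

Lemma CdP c : reflect (exists r, c = psi r) (c \in Cd).
Proof.
apply: (iffP imsetP) => [[r _ ->]|[r ->]]; by exists r.
Qed.

Lemma psi_Cd r : psi r \in Cd.
Proof. by apply/CdP; exists r. Qed.

Lemma fiber (Pr : pred 'rV[F]_(#|S| + #|S|)) :
  #|[set r | Pr (psi r)]| = (#|[set c in Cd | Pr c]| * #|[set r : RM | psi r == 0%R]|)%N.
Proof.
set K := #|[set r : RM | psi r == 0%R]|.
rewrite -sum1_card (partition_big_imset psi) /=.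
have -> : [set psi x | x in [set r | Pr (psi r)]] = [set c in Cd | Pr c].
  apply/setP => c; rewrite inE; apply/imsetP/andP => [[r]|[/CdP[r ->] Pc]].
    by rewrite inE => Pr0 ->; split; [apply: psi_Cd|].
  by exists r; rewrite ?inE.
rewrite -sum_nat_const; apply: eq_bigr => c; rewrite inE => /andP[/CdP[r0 ->] Pc].
rewrite sum1_card.
have -> : #|[pred r in [set r | Pr (psi r)] | psi r == psi r0]| = #|[set r | psi r == psi r0]|.
  apply: eq_card => r; rewrite !inE /=; apply/andP/eqP => [[_ /eqP]|->] //.
rewrite -(@card_bij RM RM (fun r : RM => r + r0) (fun r => psi r == psi r0)); last first.
  by exists (fun r : RM => r - r0) => r; rewrite ?addrK ?subrK.
by apply: eq_card => r; rewrite !inE psi_add -subr_eq0 addrK.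
Qed.
Definition Wt r := wtH (psi r).

Lemma Wt_sum r : Wt r = (#|[set s in S | (innerR r s).2 != 0%R]| +
   #|[set s in S | ((innerR r s).1 + (innerR r s).2)%R != 0%R]|)%N.
Proof.
rewrite /Wt /psi wt_gray /codeword.
rewrite -(big_enum_val (A := mem S) (fun s => ((innerR r s).2 != 0%R) + (((innerR r s).1 + (innerR r s).2)%R != 0%R)))%N.
by rewrite big_split /= !cardE_sum.
Qed.

Definition G (u v f : 'rV[F]_m) :=
  #|[set s in S | dotF u s.1.1 + dotF v s.1.2 + dotF f s.2 != 0%R]|.

Lemma Wt_G r : Wt r = (G r.1.2 r.1.1 r.2 + G (r.1.1 + r.1.2) r.1.1 r.2)%N.
Proof.
rewrite Wt_sum /G; congr (_ + _)%N; apply: eq_card => s; rewrite !inE innerR_E /= ?dotFDl ?addrA //.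
Qed.

Definition Kc (f : 'rV[F]_m) := #|[set w in Deltac F C | dotF f w != 0%R]|.

Hypotheses (An : A != set0) (Bn : B != set0) (Cm : (#|C| < m)%N).

Local Notation a := #|A|.
Local Notation b := #|B|.
Local Notation c := #|C|.

Definition w1 := ((q - 1) * q ^ (a + b - 1) * (q ^ m - q ^ c))%N.
Definition hh := ((q - 1) * q ^ (m + a + b - 1))%N.

Lemma a_gt0 : (0 < a)%N. Proof. by rewrite card_gt0. Qed.
Lemma b_gt0 : (0 < b)%N. Proof. by rewrite card_gt0. Qed.

Lemma card_RV : #|{: 'rV[F]_m}| = (q ^ m)%N.
Proof. by rewrite card_mx mul1n. Qed.

Lemma card_Deltac : #|Deltac F C| = (q ^ m - q ^ c)%N.
Proof. by rewrite /Deltac; have := cardsC (Delta F C); rewrite card_Delta card_RV => <-; rewrite addKn. Qed.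

Lemma card_S : #|S| = (q ^ a * q ^ b * (q ^ m - q ^ c))%N.
Proof. by rewrite S1E !cardsX !card_Delta card_Deltac. Qed.

Lemma w1q : (q * w1 = (q - 1) * (q ^ a * q ^ b * (q ^ m - q ^ c)))%N.
Proof.
have E : (q ^ a * q ^ b = q * q ^ (a + b - 1))%N.
  rewrite -expnD -expnS; congr (_ ^ _)%N; have := a_gt0; lia.
rewrite /w1 E; ring.
Qed.

Lemma hhq : (q * hh = (q - 1) * (q ^ a * q ^ b * q ^ m))%N.
Proof.
have E : (q ^ a * q ^ b * q ^ m = q * q ^ (m + a + b - 1))%N.
  rewrite -!expnD -expnS; congr (_ ^ _)%N; have := a_gt0; lia.
rewrite /hh E; ring.
Qed.

Lemma G_bal u v f : ~~ ((u \in Delta F (~: A)) && (v \in Delta F (~: B))) -> G u v f = w1.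
Proof.
move=> H.
have Hb : bal (setX (Delta F A) (Delta F B)) (fun p => dotF u p.1 + dotF v p.2).
  case/nandP: H => H; [exact: bal_addl (bal_dot H) | exact: bal_addr (bal_dot H)].
have := bal_neq (@bal_addl F _ _ _ (Deltac F C) _ (dotF f) Hb).
rewrite -S1E card_S -w1q => /eqP; rewrite eqn_pmul2l; last by have := q_gt1 F; lia.
by move/eqP.
Qed.

Lemma G_zero u v f : u \in Delta F (~: A) -> v \in Delta F (~: B) ->
  G u v f = (q ^ a * q ^ b * Kc f)%N.
Proof.
move=> Hu Hv; rewrite /G S1E (@zero_addl F _ _ _ (Deltac F C) (fun p => dotF u p.1 + dotF v p.2) (dotF f)).
  by rewrite cardsX !card_Delta.
move=> [p1 p2]; rewrite in_setX => /andP[H1 H2].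
by rewrite (dotF_Delta_zero Hu H1) (dotF_Delta_zero Hv H2) addr0.
Qed.
Implicit Types (f : 'rV[F]_m).
Lemma Kc_split f : Kc f = (#|[set w in Delta F setT | dotF f w != 0%R]| -
                           #|[set w in Delta F C | dotF f w != 0%R]|)%N.
Proof.
rewrite -(cardsID (Delta F C) [set w in Delta F setT | dotF f w != 0%R]).
rewrite (_ : #|[set w in Delta F setT | dotF f w != 0%R] :&: Delta F C| = #|[set w in Delta F C | dotF f w != 0%R]|); last first.
  by apply: eq_card => w; rewrite !inE !DeltaE DeltaT andbC.
rewrite addKn; apply: eq_card => w; rewrite /Deltac !inE !DeltaE DeltaT andbC.
by rewrite andbC.
Qed.

Lemma card_setT_m : #|[set: 'I_m]| = m.
Proof. by rewrite cardsT card_ord. Qed.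

Lemma notin_DeltaT f : f != 0 -> f \notin Delta F (~: setT).
Proof. by rewrite setCT Delta_set0. Qed.

Lemma Kc0 : Kc 0 = 0%N.
Proof. by rewrite /Kc cardE_sum big1 // => w _; rewrite dotF0l eqxx. Qed.

Lemma Kc_in f : f \in Delta F (~: C) -> f != 0 -> (q * Kc f = (q - 1) * q ^ m)%N.
Proof.
move=> H nz; rewrite Kc_split (dot_nz_zero H) subn0.
by rewrite (dot_nz_bal (notin_DeltaT nz)) card_setT_m.
Qed.

Lemma Kc_out f : f \notin Delta F (~: C) -> (q * Kc f = (q - 1) * q ^ m - (q - 1) * q ^ c)%N.
Proof.
move=> H; have nz : f != 0 by apply: contraNneq H => ->; apply: Delta0.
by rewrite Kc_split mulnBr (dot_nz_bal (notin_DeltaT nz)) (dot_nz_bal H) card_setT_m.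
Qed.

Definition Kq f := (q ^ a * q ^ b * Kc f)%N.

Lemma q_gt0 : (0 < q)%N. Proof. by have := q_gt1 F; lia. Qed.

Lemma Kq0 : Kq 0 = 0%N. Proof. by rewrite /Kq Kc0 muln0. Qed.

Lemma Kq_in f : f \in Delta F (~: C) -> f != 0 -> Kq f = hh.
Proof.
move=> H nz; apply/eqP; rewrite -(eqn_pmul2l q_gt0) hhq /Kq.
by rewrite mulnCA (Kc_in H nz); apply/eqP; ring.
Qed.

Lemma Kq_out f : f \notin Delta F (~: C) -> Kq f = w1.
Proof.
move=> H; apply/eqP; rewrite -(eqn_pmul2l q_gt0) w1q /Kq.
rewrite mulnCA (Kc_out H) -mulnBr; apply/eqP; ring.
Qed.

Lemma qc_lt : (q ^ c < q ^ m)%N.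
Proof. by rewrite ltn_exp2l ?q_gt1. Qed.

Lemma w1_gt0 : (0 < w1)%N.
Proof.
rewrite /w1 !muln_gt0 expn_gt0 q_gt0 /=; move: qc_lt (q_gt1 F).
by move: q (q ^ c)%N (q ^ m)%N => z x y; lia.
Qed.

Lemma w1_lt : (w1 < hh)%N.
Proof.
have E : hh = ((q - 1) * q ^ (a + b - 1) * q ^ m)%N.
  rewrite /hh -mulnA -expnD; congr (_ * _ ^ _)%N; have := a_gt0; lia.
rewrite E /w1 ltn_pmul2l; last by rewrite muln_gt0 expn_gt0 q_gt0; have := q_gt1 F; lia.
have := qc_lt; have : (0 < q ^ c)%N by rewrite expn_gt0 q_gt0.
by move: (q ^ c)%N (q ^ m)%N => x y; lia.
Qed.

Definition z1 (r : RM) := (r.1.2 \in Delta F (~: A)) && (r.1.1 \in Delta F (~: B)).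
Definition z2 (r : RM) := (r.1.1 + r.1.2 \in Delta F (~: A)) && (r.1.1 \in Delta F (~: B)).

Lemma Wt_formula r : Wt r = ((if z1 r then Kq r.2 else w1) + (if z2 r then Kq r.2 else w1))%N.
Proof.
rewrite Wt_G /z1 /z2; congr (_ + _)%N.
  by case: ifP => H; [rewrite G_zero //; case/andP: H | rewrite G_bal ?H].
by case: ifP => H; [rewrite G_zero //; case/andP: H | rewrite G_bal ?H].
Qed.
Lemma Kq_val f : Kq f = if f == 0 then 0%N else if f \in Delta F (~: C) then hh else w1.
Proof.
case: eqP => [->|/eqP fn]; first exact: Kq0.
by case: ifP => fc; [rewrite Kq_in | rewrite Kq_out ?fc].
Qed.

Ltac wtac r := rewrite Wt_formula Kq_val; move: (w1_gt0) (w1_lt);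
  case: (z1 r) (z2 r) (r.2 == 0) (r.2 \in Delta F (~: C)) => [] [] [] [];
  rewrite /= ?inE; move: w1 hh => x y; lia.

Lemma Wt_cases r : Wt r \in [:: 0; w1; 2 * w1; w1 + hh; 2 * hh]%N.
Proof. wtac r. Qed.
Lemma Wt_eq0 r : (Wt r == 0%N) = [&& z1 r, z2 r & r.2 == 0].
Proof. wtac r. Qed.
Lemma Wt_eqw1 r : (Wt r == w1) = (z1 r != z2 r) && (r.2 == 0).
Proof. wtac r. Qed.
Lemma Wt_eqw3 r : (Wt r == w1 + hh)%N = (z1 r != z2 r) && ((r.2 != 0) && (r.2 \in Delta F (~: C))).
Proof. wtac r. Qed.
Lemma Wt_eqw4 r : (Wt r == 2 * hh)%N = [&& z1 r, z2 r & (r.2 != 0) && (r.2 \in Delta F (~: C))].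
Proof. wtac r. Qed.
Lemma Wt_eqw2 r : z1 r -> z2 r -> r.2 \notin Delta F (~: C) -> Wt r = (2 * w1)%N.
Proof. by move=> H1 H2 H3; rewrite Wt_formula H1 H2 Kq_out //; lia. Qed.
Lemma Delta_addr (P : {set 'I_m}) (v w : 'rV[F]_m) : w \in Delta F P -> (v + w \in Delta F P) = (v \in Delta F P).
Proof.
move=> Hw; apply/idP/idP => H; last exact: Delta_add.
by rewrite -(addrK w v); apply: Delta_add; rewrite ?Delta_opp.
Qed.

Lemma card_triple (Xd Xe Xf : {set 'rV[F]_m}) :
  #|[set r : RM | [&& r.1.1 \in Xd, r.1.2 \in Xe & r.2 \in Xf]]| = (#|Xd| * #|Xe| * #|Xf|)%N.
Proof. by rewrite -!cardsX; apply: eq_card => -[[d e] f]; rewrite !inE /= andbA. Qed.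

Lemma card_or (T : finType) (P1 P2 : pred T) : (forall x, ~~ (P1 x && P2 x)) ->
  #|[set x | P1 x || P2 x]| = (#|[set x | P1 x]| + #|[set x | P2 x]|)%N.
Proof.
move=> H; rewrite !card_sum_all -big_split; apply: eq_bigr => x _.
by move: (H x); case: (P1 x); case: (P2 x).
Qed.

Lemma z12 r : (z1 r && z2 r) = (r.1.1 \in Delta F (~: (A :|: B))) && (r.1.2 \in Delta F (~: A)).
Proof.
rewrite /z1 /z2 setCU DeltaI.
case: (boolP (r.1.2 \in Delta F (~: A))) => He; last by rewrite andbF.
by rewrite Delta_addr //; case: (_ \in Delta F (~: A)); case: (_ \in Delta F (~: B)).
Qed.

Lemma z1nz2 r : (z1 r && ~~ z2 r) =
  (r.1.1 \in Delta F (~: B) :\: Delta F (~: (A :|: B))) && (r.1.2 \in Delta F (~: A)).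
Proof.
rewrite /z1 /z2 in_setD setCU DeltaI.
case: (boolP (r.1.2 \in Delta F (~: A))) => He; last by rewrite !andbF.
by rewrite Delta_addr //; case: (_ \in Delta F (~: A)); case: (_ \in Delta F (~: B)).
Qed.

Definition sig (r : RM) : RM := ((- r.1.1, r.1.1 + r.1.2), r.2).

Lemma sig_bij : bijective sig.
Proof. by exists sig => -[[d e] f]; rewrite /sig /= opprK ?addKr. Qed.

Lemma z1_sig r : z1 (sig r) = z2 r.
Proof. by rewrite /z1 /z2 /sig /= Delta_opp. Qed.
Lemma z2_sig r : z2 (sig r) = z1 r.
Proof. by rewrite /z1 /z2 /sig /= Delta_opp addKr. Qed.

Definition Dd := Delta F (~: B) :\: Delta F (~: (A :|: B)).

Lemma card_zz (Q : pred 'rV[F]_m) :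
  #|[set r : RM | z1 r && z2 r && Q r.2]| =
  (#|Delta F (~: (A :|: B))| * #|Delta F (~: A)| * #|[set f | Q f]|)%N.
Proof.
by rewrite -card_triple; apply: eq_card => r; rewrite !inE !DeltaE z12 andbA.
Qed.

Lemma card_zx (Q : pred 'rV[F]_m) :
  #|[set r : RM | (z1 r != z2 r) && Q r.2]| = (2 * (#|Dd| * #|Delta F (~: A)| * #|[set f | Q f]|))%N.
Proof.
have E : #|[set r : RM | z1 r && ~~ z2 r && Q r.2]| = (#|Dd| * #|Delta F (~: A)| * #|[set f | Q f]|)%N.
  rewrite -card_triple; apply: eq_card => r; rewrite [in RHS]inE [in LHS]inE /Dd z1nz2 andbA.
  by rewrite [r.2 \in _]inE.
rewrite (_ : [set r : RM | (z1 r != z2 r) && Q r.2] =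
   [set r : RM | (z1 r && ~~ z2 r && Q r.2) || (z2 r && ~~ z1 r && Q r.2)]); last first.
  by apply/setP => r; rewrite !inE; case: (z1 r); case: (z2 r); case: (Q r.2).
rewrite card_or; last by move=> r; case: (z1 r); case: (z2 r); rewrite /= ?andbF.
have E2 : #|[set r : RM | z2 r && ~~ z1 r && Q r.2]| = #|[set r : RM | z1 r && ~~ z2 r && Q r.2]|.
  have := @card_bij _ _ sig (fun r => z1 r && ~~ z2 r && Q r.2) sig_bij => /= <-.
  by apply: eq_card => r; rewrite !inE z1_sig z2_sig.
by rewrite E2 E mul2n addnn.
Qed.
Local Notation ab := #|A :|: B|.

Lemma card_DeltaC (P : {set 'I_m}) : #|Delta F (~: P)| = (q ^ (m - #|P|))%N.
Proof. by rewrite card_Delta; congr (_ ^ _)%N; have := cardsC P; rewrite card_ord; lia. Qed.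

Lemma ab_le : (ab <= m)%N. Proof. by rewrite -[X in (_ <= X)%N]card_ord max_card. Qed.
Lemma a_le : (a <= m)%N. Proof. by rewrite -[X in (_ <= X)%N]card_ord max_card. Qed.
Lemma b_le_ab : (b <= ab)%N. Proof. by rewrite subset_leq_card // subsetUr. Qed.
Lemma a_le_ab : (a <= ab)%N. Proof. by rewrite subset_leq_card // subsetUl. Qed.

Lemma card_Dd : #|Dd| = (q ^ (m - b) - q ^ (m - ab))%N.
Proof.
rewrite /Dd cardsD !card_DeltaC; congr (_ - _)%N.
rewrite (setIidPr _) ?card_DeltaC //; apply/subsetP => v.
by rewrite setCU DeltaI => /andP[].
Qed.

Lemma card_fnz : #|[set f : 'rV[F]_m | (f != 0) && (f \in Delta F (~: C))]| = (q ^ (m - c) - 1)%N.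
Proof.
rewrite -card_DeltaC (cardsD1 0 (Delta F (~: C))) Delta0 add1n subSS subn0.
by congr #|pred_of_set _|; apply/setP => f; rewrite !inE.
Qed.

Lemma card_f0 : #|[set f : 'rV[F]_m | f == 0]| = 1%N.
Proof.
rewrite (_ : [set f : 'rV[F]_m | f == 0] = [set 0]) ?cards1 //.
by apply/setP => f; rewrite !inE.
Qed.

Definition K0 := #|[set r : RM | psi r == 0%R]|.

Lemma K0E : K0 = (q ^ (m - ab) * q ^ (m - a) * 1)%N.
Proof.
rewrite -card_f0 -!card_DeltaC -card_zz /K0; apply: eq_card => r.
by rewrite !inE -wtH_eq0 -/(Wt r) Wt_eq0 andbA.
Qed.

Lemma K0_gt0 : (0 < K0)%N.
Proof. by rewrite K0E !muln_gt0 !expn_gt0 q_gt0. Qed.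


Lemma freq_fiber w : (freq Cd w * K0)%N = #|[set r : RM | Wt r == w]|.
Proof. by rewrite /K0 -fiber. Qed.

Lemma qsplit x y : (y <= x)%N -> (q ^ x = q ^ (x - y) * q ^ y)%N.
Proof. by move=> H; rewrite -expnD subnK. Qed.

Lemma freq_w1 : freq Cd w1 = (2 * (q ^ (ab - b) - 1))%N.
Proof.
apply/eqP; rewrite -(eqn_pmul2r K0_gt0) freq_fiber.
rewrite (_ : [set r : RM | Wt r == w1] = [set r : RM | (z1 r != z2 r) && (r.2 == 0)]); last first.
  by apply/setP => r; rewrite !inE Wt_eqw1.
rewrite (card_zx (fun f => f == 0)) card_f0 card_Dd card_DeltaC K0E.
rewrite (@qsplit (m - b) (m - ab)); last by have := b_le_ab; lia.
rewrite (_ : (m - b - (m - ab) = ab - b)%N); last by have := b_le_ab; have := ab_le; lia.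
by rewrite -{2}[(q ^ (m - ab))%N]mul1n -mulnBl; apply/eqP; ring.
Qed.

Lemma freq_w3 : freq Cd (w1 + hh) = (2 * (q ^ (ab - b) - 1) * (q ^ (m - c) - 1))%N.
Proof.
apply/eqP; rewrite -(eqn_pmul2r K0_gt0) freq_fiber.
rewrite (_ : [set r : RM | Wt r == w1 + hh] =
   [set r : RM | (z1 r != z2 r) && ((r.2 != 0) && (r.2 \in Delta F (~: C)))]); last first.
  by apply/setP => r; rewrite !inE Wt_eqw3 !DeltaE.
rewrite (card_zx (fun f => (f != 0) && (f \in Delta F (~: C)))) card_fnz card_Dd card_DeltaC K0E.
rewrite (@qsplit (m - b) (m - ab)); last by have := b_le_ab; lia.
rewrite (_ : (m - b - (m - ab) = ab - b)%N); last by have := b_le_ab; have := ab_le; lia.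
by rewrite -{2}[(q ^ (m - ab))%N]mul1n -mulnBl; apply/eqP; ring.
Qed.

Lemma freq_w4 : freq Cd (2 * hh) = (q ^ (m - c) - 1)%N.
Proof.
apply/eqP; rewrite -(eqn_pmul2r K0_gt0) freq_fiber.
rewrite (_ : [set r : RM | Wt r == 2 * hh] =
   [set r : RM | z1 r && z2 r && ((r.2 != 0) && (r.2 \in Delta F (~: C)))]); last first.
  by apply/setP => r; rewrite !inE Wt_eqw4 !DeltaE andbA.
rewrite (card_zz (fun f => (f != 0) && (f \in Delta F (~: C)))) card_fnz !card_DeltaC K0E.
by apply/eqP; ring.
Qed.

Lemma card_Cd : #|Cd| = (q ^ (m + a + ab))%N.
Proof.
apply/eqP; rewrite -(eqn_pmul2r K0_gt0).
have := fiber predT; rewrite cardsT (_ : #|[set c in Cd | predT c]| = #|Cd|); last first.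
  by apply: eq_card => c; rewrite !inE andbT.
rewrite -/K0 => <-; rewrite /= card_prod card_prod card_RV K0E -!expnD muln1.
rewrite -expnD; apply/eqP; congr (_ ^ _)%N; have := ab_le; have := a_le.
by move: #|A| #|A :|: B| => x y; lia.
Qed.

Lemma freq_0 : freq Cd 0 = 1%N.
Proof.
rewrite /freq (_ : [set c in Cd | wtH c == 0%N] = [set 0]) ?cards1 //.
apply/setP => x; rewrite !inE wtH_eq0.
case: eqP => [->|]; rewrite ?andbF // andbT; by rewrite -psi0 psi_Cd.
Qed.

Lemma Cd_wt x : x \in Cd -> wtH x \in [:: 0; w1; 2 * w1; w1 + hh; 2 * hh]%N.
Proof. by case/CdP => r ->; apply: Wt_cases. Qed.

Lemma card_Cd_sum : #|Cd| =
  (freq Cd 0 + freq Cd w1 + freq Cd (2 * w1) + freq Cd (w1 + hh) + freq Cd (2 * hh))%N.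
Proof.
rewrite /freq !cardE_sum -!big_split -sum1_card /=; apply: eq_bigr => x /Cd_wt.
rewrite !inE; move: (wtH x) w1_gt0 w1_lt; move: w1 hh => u v y; lia.
Qed.
Lemma sum_lin0 (T1 T2 : finType) (X : {set T1}) (Y : {set T2}) (g : T1 -> F) (h : T2 -> F) :
  (#|X|%:R : F) = 0 -> (#|Y|%:R : F) = 0 -> \sum_(p in setX X Y) (g p.1 + h p.2) = 0.
Proof.
move=> HX HY; rewrite sum_setX; under eq_bigr do rewrite big_split /=.
rewrite big_split /= big1 ?add0r => [|x _]; last by rewrite sumr_const -mulr_natr HY mulr0.
by rewrite sumr_const -mulr_natr HX mulr0.
Qed.

Lemma sum_lin0' (T1 T2 : finType) (X : {set T1}) (Y : {set T2}) (g : T1 -> F) (h : T2 -> F)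
  (f : T1 * T2 -> F) : (#|X|%:R : F) = 0 -> (#|Y|%:R : F) = 0 ->
  (forall p, f p = g p.1 + h p.2) -> \sum_(p in setX X Y) f p = 0.
Proof. by move=> HX HY Hf; rewrite (eq_bigr _ (fun p _ => Hf p)) sum_lin0. Qed.

Lemma orth_gen (T1 T2 : finType) (P : {set T1}) (Z : {set T2})
  (U V V' : T1 -> F) (H H' K : T2 -> F) :
  (#|Z|%:R : F) = 0 -> (#|P|%:R : F) = 0 ->
  \sum_(p in P) V p = 0 -> \sum_(p in P) V' p = 0 ->
  forall f : T1 * T2 -> F, (forall s, f s = U s.1 + V s.1 * H s.2 + V' s.1 * H' s.2 + K s.2) ->
  \sum_(s in setX P Z) f s = 0.
Proof.
move=> HZ HP HV HV' f Hf; rewrite (eq_bigr _ (fun s _ => Hf s)) sum_setX; under eq_bigr do rewrite !big_split /=.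
rewrite !big_split /=.
have E1 : \sum_(p in P) \sum_(z in Z) U p = 0.
  by rewrite big1 // => p _; rewrite sumr_const -mulr_natr HZ mulr0.
have E2 (W : T1 -> F) (L : T2 -> F) : \sum_(p in P) W p = 0 -> \sum_(p in P) \sum_(z in Z) W p * L z = 0.
  by move=> HW; rewrite (eq_bigr (fun p => W p * \sum_(z in Z) L z)) => [|p _];
    [rewrite -mulr_suml HW mul0r | rewrite mulr_sumr].
have E3 : \sum_(p in P) \sum_(z in Z) K z = 0.
  by rewrite exchange_big /= big1 // => z _; rewrite sumr_const -mulr_natr HP mulr0.
by rewrite E1 E2 // E2 // E3 !addr0.
Qed.

Lemma qpow0 k : (0 < k)%N -> ((q ^ k)%N%:R : F) = 0.
Proof. by move=> k0; rewrite natrX qR0 expr0n; case: k k0. Qed.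

Lemma self_orth (Cn : C != set0) r r' : dotF (psi r) (psi r') = 0.
Proof.
rewrite /psi dot_gray /codeword.
rewrite -(big_enum_val (A := mem S) (fun s => (innerR r s).2 * (innerR r' s).2 +
   ((innerR r s).1 + (innerR r s).2) * ((innerR r' s).1 + (innerR r' s).2))).
rewrite S1E.
pose al (t : RM) (p : 'rV[F]_m * 'rV[F]_m) := dotF t.1.2 p.1 + dotF t.1.1 p.2.
pose x (t : RM) (p : 'rV[F]_m * 'rV[F]_m) := dotF t.1.1 p.1.
have c_gt0 : (0 < c)%N by rewrite card_gt0.
apply: (@orth_gen _ _ (setX (Delta F A) (Delta F B)) (Deltac F C)
  (fun p => al r p * al r' p + (x r p + al r p) * (x r' p + al r' p))
  (fun p => al r' p + (x r' p + al r' p)) (fun p => al r p + (x r p + al r p))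
  (dotF r.2) (dotF r'.2) (fun z => dotF r.2 z * dotF r'.2 z + dotF r.2 z * dotF r'.2 z)); last first.
  by move=> s; rewrite !innerR_E /al /x /=; ring.
- apply: (@sum_lin0' _ _ _ _ (fun w => dotF r.1.2 w + dotF r.1.1 w + dotF r.1.2 w)
     (fun w => dotF r.1.1 w + dotF r.1.1 w)).
  + by rewrite card_Delta qpow0 ?a_gt0.
  + by rewrite card_Delta qpow0 ?b_gt0.
  + by move=> p; rewrite /al /x; ring.
- apply: (@sum_lin0' _ _ _ _ (fun w => dotF r'.1.2 w + dotF r'.1.1 w + dotF r'.1.2 w)
     (fun w => dotF r'.1.1 w + dotF r'.1.1 w)).
  + by rewrite card_Delta qpow0 ?a_gt0.
  + by rewrite card_Delta qpow0 ?b_gt0.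
  + by move=> p; rewrite /al /x; ring.
- by rewrite cardsX !card_Delta natrM qpow0 ?mul0r // a_gt0.
- have mc : (q ^ c <= q ^ m)%N by apply: ltnW; apply: qc_lt.
  have m0 : (0 < m)%N by move: Cm; lia.
  by rewrite card_Deltac (natrB _ mc) (qpow0 m0) (qpow0 c_gt0) subrr.
Qed.
Lemma Cd0 : 0 \in Cd.
Proof. by rewrite -psi0; apply: psi_Cd. Qed.

Lemma Cd_linear : is_linear_code Cd.
Proof.
split; first exact: Cd0.
by move=> a0 x y /CdP[r ->] /CdP[r' ->]; rewrite -psi_lin psi_Cd.
Qed.

Lemma Cd_span v : (v \in <<enum Cd>>%VS) = (v \in Cd).
Proof.
apply/idP/idP => H; last by apply: memv_span; rewrite mem_enum.
have := @coord_span _ _ _ (in_tuple (enum Cd)) v H => ->.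
elim/big_ind: _ => [|x y Hx Hy|i _] /=.
- exact: Cd0.
- by have [_ Hl] := Cd_linear; rewrite -[x]scale1r Hl.
- have [_ Hl] := Cd_linear; rewrite -[_ *: _]addr0; apply: Hl; last exact: Cd0.
  by rewrite -(mem_enum (mem Cd)) mem_nth // size_tuple.
Qed.

Lemma code_dimE : code_dim Cd = (m + a + ab)%N.
Proof.
apply/eqP; rewrite -(eqn_exp2l _ _ (q_gt1 F)) -card_Cd /code_dim -card_vspace.
by apply/eqP; apply: eq_card => v; rewrite Cd_span.
Qed.

Lemma delta_nz (i : 'I_m) : (delta_mx 0 i : 'rV[F]_m) != 0.
Proof. by apply/eqP => /rowP /(_ i); rewrite !mxE !eqxx /= => /eqP; rewrite oner_eq0. Qed.

Lemma delta_notin (P : {set 'I_m}) (i : 'I_m) : i \notin P -> (delta_mx 0 i : 'rV[F]_m) \notin Delta F P.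
Proof.
move=> iP; apply/DeltaP => /(_ i iP) /eqP; by rewrite !mxE !eqxx /= oner_eq0.
Qed.

Hypotheses (AB : ~~ (A \subset B)) (Cn : C != set0).

Lemma witnesses : exists r1 r2 r3 r4 : RM,
  [/\ Wt r1 = w1, Wt r2 = (2 * w1)%N, Wt r3 = (w1 + hh)%N & Wt r4 = (2 * hh)%N].
Proof.
have [i iA iB] := subsetPn AB.
have [j jC] := set0Pn C Cn.
have [k kC] : exists k, k \notin C.
  case: (pickP (fun k => k \notin C)) => [k H|H]; first by exists k.
  suff : C = setT by move=> E; move: Cm; rewrite E cardsT card_ord ltnn.
  by apply/setP => k; rewrite inE; move: (H k) => /negbFE.
have dB : (delta_mx 0 i : 'rV[F]_m) \in Delta F (~: B) by apply: Delta_delta; rewrite inE.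
have dA : (delta_mx 0 i : 'rV[F]_m) \notin Delta F (~: A) by apply: delta_notin; rewrite inE negbK.
have kCc : (delta_mx 0 k : 'rV[F]_m) \in Delta F (~: C) by apply: Delta_delta; rewrite inE.
have jCc : (delta_mx 0 j : 'rV[F]_m) \notin Delta F (~: C) by apply: delta_notin; rewrite inE negbK.
pose r1 : RM := ((delta_mx 0 i, 0), 0).
pose r2 : RM := ((0, 0), delta_mx 0 j).
pose r3 : RM := ((delta_mx 0 i, 0), delta_mx 0 k).
pose r4 : RM := ((0, 0), delta_mx 0 k).
have z1i : z1 r1 && z1 r3 by rewrite /z1 /= Delta0 dB.
have z2i : ~~ z2 r1 && ~~ z2 r3 by rewrite /z2 /= addr0 (negbTE dA).
have z10 : [&& z1 r2, z1 r4, z2 r2 & z2 r4] by rewrite /z1 /z2 /= addr0 !Delta0.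
case/andP: z1i => z11 z13; case/andP: z2i => z21 z23; case/and4P: z10 => z12 z14 z22 z24.
exists r1, r2, r3, r4.
split.
- by apply/eqP; rewrite Wt_eqw1 z11 (negbTE z21) /r1 /= eqxx.
- by apply: Wt_eqw2.
- by apply/eqP; rewrite Wt_eqw3 z13 (negbTE z23) /r3 /= delta_nz kCc.
- by apply/eqP; rewrite Wt_eqw4 z14 z24 /r4 /= delta_nz kCc.
Qed.

Lemma min_distE : min_dist_is Cd w1.
Proof.
have [r1 [_ [_ [_ [H1 _ _ _]]]]] := witnesses.
split.
  exists (psi r1); first exact: psi_Cd.
  exists 0; first exact: Cd0.
  rewrite subr0 -/(Wt r1) H1; split => //.
  by rewrite -wtH_eq0 -/(Wt r1) H1; have := w1_gt0; lia.
move=> x y /CdP[r ->] /CdP[r' ->] ne.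
rewrite -psi_sub; have := Wt_cases (r - r'); have : Wt (r - r') != 0%N.
  by rewrite /Wt wtH_eq0 psi_sub subr_eq0.
rewrite /Wt !inE; move: (wtH (psi (r - r'))) w1_lt; move: w1 hh => u v z; lia.
Qed.

Lemma nz_weightsE : perm_eq (nz_weights Cd) [:: w1; 2 * w1; w1 + hh; 2 * hh]%N.
Proof.
apply: uniq_perm; first exact: undup_uniq.
  rewrite /= !inE; move: w1_gt0 w1_lt; move: w1 hh => u v; lia.
move=> w; rewrite mem_undup; apply/idP/idP.
  case/mapP => c; rewrite mem_filter mem_enum => /andP[nz /CdP[r E]] ->.
  have := Wt_cases r; have : Wt r != 0%N by rewrite /Wt wtH_eq0 -E.
  rewrite /Wt -E !inE; move: (wtH c) w1_lt; move: w1 hh => u v z; lia.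
have [r1 [r2 [r3 [r4 [H1 H2 H3 H4]]]]] := witnesses.
have wit r : Wt r != 0%N -> Wt r \in [seq wtH c | c <- enum Cd & c != 0].
  move=> nz; apply/mapP; exists (psi r) => //.
  by rewrite mem_filter mem_enum psi_Cd andbT -wtH_eq0.
rewrite !inE => /or4P [] /eqP ->; [rewrite -H1|rewrite -H2|rewrite -H3|rewrite -H4]; apply: wit;
  rewrite ?H1 ?H2 ?H3 ?H4; move: w1_gt0 w1_lt; move: w1 hh => u v; lia.
Qed.

Lemma Cd_wt_nz x : x \in Cd -> x != 0 -> wtH x \in [:: w1; 2 * w1; w1 + hh; 2 * hh]%N.
Proof.
case/CdP => r -> nz; have := Wt_cases r; have : Wt r != 0%N by rewrite /Wt wtH_eq0.
rewrite /Wt !inE; move: (wtH (psi r)) w1_lt; move: w1 hh => u v z; lia.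
Qed.

Lemma w3_eq : ((q - 1) * q ^ (a + b - 1) * (2 * q ^ m - q ^ c) = w1 + hh)%N.
Proof.
rewrite /w1 /hh.
have -> : (m + a + b - 1 = (a + b - 1) + m)%N by have := a_gt0; lia.
have le : (q ^ c <= q ^ m)%N by apply: ltnW; apply: qc_lt.
rewrite expnD; move: le; move: (q ^ c)%N (q ^ m)%N => x y le.
have -> : (2 * y - x = (y - x) + y)%N by lia.
ring.
Qed.

Lemma len_eq : (#|S| + #|S| = 2 * q ^ (a + b) * (q ^ m - q ^ c))%N.
Proof. rewrite card_S expnD; ring. Qed.

Lemma freq_w2 : freq Cd (2 * w1) = (q ^ (m + a + ab) + q ^ (m - c) - 2 * q ^ (m - c + ab - b))%N.
Proof.
have T := card_Cd_sum.
rewrite freq_0 freq_w1 freq_w3 freq_w4 card_Cd in T.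
have bab := b_le_ab; have abm := ab_le; have a0 := a_gt0.
have -> : (m - c + ab - b = (m - c) + (ab - b))%N.
  by move: bab abm Cm; move: a b c ab => x y z w; lia.
rewrite (expnD q (m - c) (ab - b)); move: T.
have P1 : (0 < q ^ (m - c))%N by rewrite expn_gt0 q_gt0.
have Q1 : (0 < q ^ (ab - b))%N by rewrite expn_gt0 q_gt0.
move: P1 Q1; move: (q ^ (m - c))%N (q ^ (ab - b))%N (q ^ (m + a + ab))%N (freq Cd (2 * w1)) => P Q T x.
case: P => // P' _; case: Q => // Q' _.
rewrite !subn1 /= (_ : (P'.+1 * Q'.+1 = P' * Q' + P' + Q' + 1)%N); last by ring.
rewrite (_ : (2 * Q' * P' = 2 * (P' * Q'))%N); last by ring.
by move: (P' * Q')%N => R; lia.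
Qed.
End Code.
Theorem mainTheorem5 (F : finFieldType) (m : nat) (A B C : {set 'I_m}) :
  (2 <= m)%N -> A != set0 -> B != set0 -> C != set0 ->
  (#|C| < m)%N -> ~~ (A \subset B) ->
  let q := #|F| in
  let a := #|A| in let b := #|B| in let c := #|C| in let ab := #|A :|: B| in
  let Cd := grayCode (S1 F A B C) in
  let w1 := ((q - 1) * q ^ (a + b - 1) * (q ^ m - q ^ c))%N in
  let w2 := (2 * ((q - 1) * q ^ (a + b - 1) * (q ^ m - q ^ c)))%N in
  let w3 := ((q - 1) * q ^ (a + b - 1) * (2 * q ^ m - q ^ c))%N in
  let w4 := (2 * (q - 1) * q ^ (m + a + b - 1))%N in
  [/\ (#|S1 F A B C| + #|S1 F A B C| = 2 * q ^ (a + b) * (q ^ m - q ^ c))%N,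
      is_linear_code Cd,
      code_dim Cd = (m + a + ab)%N,
      min_dist_is Cd w1 &
    [/\ size (nz_weights Cd) = 4%N,
      (forall x, x \in Cd -> x != 0 -> wtH x \in [:: w1; w2; w3; w4]),
      [/\ freq Cd w1 = (2 * (q ^ (ab - b) - 1))%N,
          freq Cd w2 = (q ^ (m + a + ab) + q ^ (m - c) - 2 * q ^ (m - c + ab - b))%N,
          freq Cd w3 = (2 * (q ^ (ab - b) - 1) * (q ^ (m - c) - 1))%N &
          freq Cd w4 = (q ^ (m - c) - 1)%N] &
      ((q = 2)%N \/ (q = 3)%N -> self_orthogonal Cd)]].
Proof.
move=> m2 An Bn Cn Cm AB q a b c ab Cd w1' w2 w3 w4.
have E1 : w1' = w1 F A B C by [].
have E2 : w2 = (2 * w1 F A B C)%N by [].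
have E4 : w4 = (2 * hh F A B)%N by rewrite /w4 /hh mulnA.
have E3 : w3 = (w1 F A B C + hh F A B)%N by rewrite /w3 w3_eq.
rewrite E1 E2 E3 E4.
split.
- exact: len_eq.
- exact: Cd_linear.
- exact: code_dimE.
- exact: min_distE.
split.
- by rewrite (perm_size (nz_weightsE F An Bn Cm AB Cn)).
- by move=> x xC nz; apply: Cd_wt_nz.
- split.
  + exact: freq_w1.
  + exact: freq_w2.
  + exact: freq_w3.
  + exact: freq_w4.
- by move=> _ x y /CdP[r ->] /CdP[r' ->]; apply: self_orth.
Qed.
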